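(* Let $V$ be a finite ground set partitioned into groups $V_1,\dots,V_m$, $\alpha$ a nonnegative integer, $c$ a positive integer, $f:2^V\to\mathbb{R}_{\ge0}$ submodular, and let $OPT$ be an optimal solution of Problem P.2 (defined in the context). Let $z=\min_{i\in[m]}\lfloor|OPT\cap V_i|/2\rfloor$. Let $A^{P22}$ be any feasible solution of Problem P.2.2 and let $A^{\mathsf{final}}$ be obtained from it by the completion step described in the context. Then $A^{\mathsf{final}}$ is a feasible solution of Problem P.2.1, and hence of Problem P.2.
   Context: Problem P.2: maximize $f(S)$ over $S\subseteq V$ with $|S\cap V_i|-|S\cap V_j|\le\alpha$ for all $i,j\in[m]$ and $|S|\le c$. Problem P.2.1: maximize $f(S)$ subject to $z\le|S\cap V_i|\le z+\alpha$ for all $i\in[m]$ and $|S|\le c$. Problem P.2.2: maximize $f(S)$ subject to $|S\cap V_i|\le z+\alpha$ for all $i$ and $\sum_{i\in[m]}\max\{z,|S\cap V_i|\}\le c$. Completion step: let $L=\{i:|A^{P22}\cap V_i|<z\}$; for each $i\in L$ pick arbitrary disjoint $X_i,Y_i\subseteq V_i\setminus A^{P22}$ with $|X_i|=|Y_i|=z-|A^{P22}\cap V_i|$; let $A^1=A^{P22}\cup\bigcup_{i\in L}X_i$, $A^2=A^{P22}\cup\bigcup_{i\in L}Y_i$, and $A^{\mathsf{final}}$ is the one of $A^1,A^2$ with larger $f$-value. *)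

(* Defs.v *)
From mathcomp Require Import all_boot all_order all_algebra.
Set Implicit Arguments. Unset Strict Implicit. Unset Printing Implicit Defensive.
Import Order.TTheory GRing.Theory Num.Theory.

Section Defs.
Variables (T : finType) (m : nat) (grp : T -> 'I_m).

Definition Vg (i : 'I_m) : {set T} := [set x | grp x == i].

Definition feasP2 (alpha c : nat) (S : {set T}) : Prop :=
  (forall i j : 'I_m, #|S :&: Vg i| <= #|S :&: Vg j| + alpha)%N /\ (#|S| <= c)%N.

Definition feasP21 (alpha c z : nat) (S : {set T}) : Prop :=
  (forall i : 'I_m, z <= #|S :&: Vg i| <= z + alpha)%N /\ (#|S| <= c)%N.

Definition feasP22 (alpha c z : nat) (S : {set T}) : Prop :=
  (forall i : 'I_m, #|S :&: Vg i| <= z + alpha)%N /\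
  (\sum_(i < m) maxn z #|S :&: Vg i| <= c)%N.

(* z = min_i floor(|OPT ∩ V_i| / 2)  (the neutral element #|OPT| is an upper
   bound of every term, so for m > 0 this is exactly the minimum). *)
Definition zOf (OPT : {set T}) : nat :=
  \big[minn/#|OPT|]_(i < m) (#|OPT :&: Vg i| %/ 2).

Definition lowGroups (z : nat) (A : {set T}) : {set 'I_m} :=
  [set i | #|A :&: Vg i| < z]%N.
End Defs.

Definition submodular (T : finType) (R : realFieldType) (f : {set T} -> R) : Prop :=
  forall A B : {set T}, (f (A :|: B) + f (A :&: B) <= f A + f B)%R.

Definition nonneg_fun (T : finType) (R : realFieldType) (f : {set T} -> R) : Prop :=
  forall A : {set T}, (0 <= f A)%R.

(* Main.v *)
Require Import Defs.
From mathcomp Require Import all_boot all_order all_algebra.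
From mathcomp Require Import zify.
Import Order.TTheory GRing.Theory Num.Theory.

Lemma capV (T : finType) (m : nat) (grp : T -> 'I_m) (z : nat) (A0 : {set T})
  (W : 'I_m -> {set T}) :
  (forall i, i \in lowGroups grp z A0 -> W i \subset Vg grp i :\: A0 /\
       #|W i| = (z - #|A0 :&: Vg grp i|)%N) ->
  forall i, #|(A0 :|: \bigcup_(j in lowGroups grp z A0) W j) :&: Vg grp i| =
            maxn z #|A0 :&: Vg grp i|.
Proof.
move=> HW i.
have E : (A0 :|: \bigcup_(j in lowGroups grp z A0) W j) :&: Vg grp i =
   (A0 :&: Vg grp i) :|: (if i \in lowGroups grp z A0 then W i else set0).
  apply/setP=> x; rewrite in_setU !in_setI in_setU; apply/idP/idP.
  - case/andP=> /orP[xA|/bigcupP[j jL xW]] xi; first by rewrite xA xi.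
    have [/subsetP sub _] := HW j jL.
    move: (sub x xW); rewrite !inE => /andP[_ /eqP gj].
    have ji : j = i by apply/eqP; rewrite -gj; move: xi; rewrite inE.
    rewrite -ji; apply/orP; right; rewrite ifT //; by move: jL; rewrite inE.
  - case/orP=> [/andP[-> ->]//|]; case: ifP => iL; last by rewrite inE.
    move=> xW; have [/subsetP sub _] := HW i iL.
    move: (sub x xW); rewrite in_setD => /andP[_ ->]; rewrite andbT.
    by apply/orP; right; apply/bigcupP; exists i.
rewrite E; case: ifP => iL; last first.
  rewrite setU0; move: iL; rewrite inE => /negbT; rewrite -leqNgt => h.
  by apply/esym/maxn_idPr.
have [sub cW] := HW i iL.
rewrite cardsU cW.
have -> : (A0 :&: Vg grp i) :&: W i = set0.
  apply/setP=> x; rewrite !inE; apply/negbTE; apply/negP => /andP[/andP[xA _] xW].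
  by move/subsetP: sub => /(_ x xW); rewrite !inE xA.
move: iL; rewrite inE => lt; rewrite cards0 subn0.
rewrite (maxn_idPl (ltnW lt)); lia.
Qed.

Lemma card_sum (T : finType) (m : nat) (grp : T -> 'I_m) (A : {set T}) :
  #|A| = \sum_(i < m) #|A :&: Vg grp i|.
Proof.
rewrite -sum1_card (partition_big grp predT) //=.
apply: eq_bigr => i _; rewrite -sum1_card; apply: eq_bigl => x.
by rewrite !inE.
Qed.

Lemma main_feas (T : finType) (m : nat) (grp : T -> 'I_m) (alpha c z : nat)
  (A0 : {set T}) (W : 'I_m -> {set T}) :
  feasP22 grp alpha c z A0 ->
  (forall i, i \in lowGroups grp z A0 -> W i \subset Vg grp i :\: A0 /\
       #|W i| = (z - #|A0 :&: Vg grp i|)%N) ->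
  feasP21 grp alpha c z (A0 :|: \bigcup_(j in lowGroups grp z A0) W j) /\
  feasP2 grp alpha c (A0 :|: \bigcup_(j in lowGroups grp z A0) W j).
Proof.
move=> [Hle Hsum] HW.
have C := @capV _ _ _ _ _ _ HW.
have F1 : forall i, (z <= #|(A0 :|: \bigcup_(j in lowGroups grp z A0) W j) :&: Vg grp i| <= z + alpha)%N.
  move=> i; rewrite C; move: (Hle i); lia.
have F2 : (#|A0 :|: \bigcup_(j in lowGroups grp z A0) W j| <= c)%N.
  rewrite (@card_sum _ _ grp); apply: leq_trans Hsum; apply: leq_sum => i _.
  by rewrite C.
split; split => //.
move=> i j; move: (F1 i) (F1 j); lia.
Qed.
Theorem lemma15 (R : realFieldType) (T : finType) (m : nat) (grp : T -> 'I_m)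
  (alpha c : nat) (f : {set T} -> R) (OPT : {set T}) (AP22 : {set T})
  (X Y : 'I_m -> {set T}) (Afinal : {set T}) :
  (0 < m)%N ->
  (0 < c)%N ->
  nonneg_fun f ->
  submodular f ->
  (* OPT is an optimal solution of P.2 *)
  feasP2 grp alpha c OPT ->
  (forall S : {set T}, feasP2 grp alpha c S -> (f S <= f OPT)%R) ->
  (* AP22 is feasible for P.2.2 with z = zOf OPT *)
  feasP22 grp alpha c (zOf grp OPT) AP22 ->
  (* completion step *)
  (forall i, i \in lowGroups grp (zOf grp OPT) AP22 ->
     [/\ X i \subset Vg grp i :\: AP22, Y i \subset Vg grp i :\: AP22,
         [disjoint X i & Y i],
         #|X i| = (zOf grp OPT - #|AP22 :&: Vg grp i|)%N &
         #|Y i| = (zOf grp OPT - #|AP22 :&: Vg grp i|)%N]) ->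
  let A1 := AP22 :|: \bigcup_(i in lowGroups grp (zOf grp OPT) AP22) X i in
  let A2 := AP22 :|: \bigcup_(i in lowGroups grp (zOf grp OPT) AP22) Y i in
  (Afinal = A1 /\ (f A2 <= f A1)%R \/ Afinal = A2 /\ (f A1 <= f A2)%R) ->
  feasP21 grp alpha c (zOf grp OPT) Afinal /\ feasP2 grp alpha c Afinal.
Proof.
move=> _ _ _ _ _ _ H22 Hc A1 A2 Hfin.
case: Hfin => [[-> _]|[-> _]].
- apply: main_feas => // i iL; by case: (Hc i iL).
- apply: main_feas => // i iL; by case: (Hc i iL).
Qed.
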